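(* Let $\beta\in[0,1]$ and let $f\in\mathcal{A}_{\beta}$ with $f(z)=z+\sum_{n=2}^{\infty}a_nz^n$. Then for every real $\mu$, $$|a_3-\mu a_2^2|\le\begin{cases}\dfrac{(8-12\mu)+(8\mu-8)\beta+2\beta^2}{(3-2\beta)(2-\beta)^2}, & \mu<0,\\[2mm] \dfrac{2}{3-2\beta}, & 0\le\mu\le\dfrac{(2-\beta)^2}{3-2\beta},\\[2mm] -\dfrac{(8-12\mu)+(8\mu-8)\beta+2\beta^2}{(3-2\beta)(2-\beta)^2}, & \mu>\dfrac{(2-\beta)^2}{3-2\beta}.\end{cases}$$ All inequalities are sharp.
   Context: $\mathbb{D}=\{z\in\mathbb{C}:|z|<1\}$. For $\beta\in[0,1]$, $\mathcal{A}_{\beta}$ is the set of analytic functions $f$ on $\mathbb{D}$ with $f(0)=0$, $f'(0)=1$ (so $f(z)=z+\sum_{n\ge2}a_nz^n$) such that $\operatorname{Re}\big(\beta f(z)/z+(1-\beta)f'(z)\big)>0$ for all $z\in\mathbb{D}$. Sharp means that for each $\mu$ in each range there is $f\in\mathcal{A}_\beta$ attaining equality (for $\mu<0$ or $\mu>(2-\beta)^2/(3-2\beta)$: $f(z)=z+\sum_{n\ge2}\frac{2}{n-\beta(n-1)}z^n$; for the middle range: $f$ with $\beta f(z)/z+(1-\beta)f'(z)=\frac{1+z^2}{1-z^2}$). *)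

(* Defs.v *)
From Stdlib Require Import Reals.
From Coquelicot Require Import Coquelicot.
Open Scope R_scope.

Definition in_disk (z : C) : Prop := Cmod z < 1.

Definition analytic_on_disk_with_coeffs (f : C -> C) (a : nat -> C) : Prop :=
  forall z : C, in_disk z -> is_pseries (K := C_AbsRing) (V := C_NormedModule) a z (f z).

(* At z = 0 the expression beta f(z)/z + (1-beta) f'(z) is
   understood by removable singularity and equals beta + (1-beta) = 1 > 0, so
   the condition is imposed for z <> 0. *)
Definition in_A (beta : R) (f : C -> C) (a : nat -> C) : Prop :=
  analytic_on_disk_with_coeffs f a /\
  a 0%nat = RtoC 0 /\ a 1%nat = RtoC 1 /\
  (forall z : C, in_disk z ->
     exists l : C, is_derive (K := C_AbsRing) (V := C_NormedModule) f z l /\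
       (z <> RtoC 0 ->
          0 < Re (Cplus (Cmult (RtoC beta) (Cdiv (f z) z))
                        (Cmult (RtoC (1 - beta)) l)))).

Definition phi (beta mu : R) : R :=
  ((8 - 12 * mu) + (8 * mu - 8) * beta + 2 * beta ^ 2)
  / ((3 - 2 * beta) * (2 - beta) ^ 2).

Definition fekete_szego_bound (beta mu : R) : R :=
  if Rlt_dec mu 0 then phi beta mu
  else if Rle_dec mu ((2 - beta) ^ 2 / (3 - 2 * beta)) then 2 / (3 - 2 * beta)
  else - phi beta mu.

Definition fs_functional (a : nat -> C) (mu : R) : C :=
  Cminus (a 3%nat) (Cmult (RtoC mu) (Cmult (a 2%nat) (a 2%nat))).

(* Main.v *)
Require Import Defs.
From Stdlib Require Import Reals Lra Lia Psatz Arith.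
From Coquelicot Require Import Coquelicot.
Open Scope R_scope.


Notation CS := (is_series (K:=C_AbsRing) (V:=C_NormedModule)).

Lemma powC (z:C) k : pow_n (K:=C_AbsRing) z k = Cpow z k.
Proof. induction k; simpl; auto. Qed.

Lemma sumC_S (a : nat -> C) n :
  sum_n (G:=C_AbelianMonoid) a (S n) = Cplus (sum_n (G:=C_AbelianMonoid) a n) (a (S n)).
Proof. exact (sum_Sn (G:=C_AbelianMonoid) a n). Qed.

Lemma sumC_0 (a : nat -> C) : sum_n (G:=C_AbelianMonoid) a 0 = a 0%nat.
Proof. exact (sum_O (G:=C_AbelianMonoid) a). Qed.

Lemma CS_bound (a:nat->C) l (e:nat->R) :
  (forall n, Cmod (Cminus (sum_n (G:=C_AbelianMonoid) a n) l) <= e n) ->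
  (forall eps, 0 < eps -> exists N, forall n, (N <= n)%nat -> e n < eps) ->
  CS a l.
Proof.
  intros He Hl. unfold is_series. apply filterlim_locally_ball_norm. intros eps.
  destruct (Hl eps (cond_pos eps)) as [N HN]. exists N. intros n Hn.
  unfold ball_norm. eapply Rle_lt_trans. 2: apply (HN n Hn). apply He.
Qed.

Lemma CS_unique (a:nat->C) l l' : CS a l -> CS a l' -> l = l'.
Proof.
  intros H1 H2. eapply (filterlim_locally_unique (F:=eventually)); eauto.
Qed.

Lemma sum_stable (a:nat->C) N : (forall n, (N < n)%nat -> a n = 0%C) ->
  forall n, (N <= n)%nat -> sum_n (G:=C_AbelianMonoid) a n = sum_n (G:=C_AbelianMonoid) a N.
Proof.
  intros H n Hn. induction n as [|n IH].
  - assert (N = 0%nat) by lia. subst. reflexivity.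
  - destruct (Nat.eq_dec N (S n)). subst; reflexivity.
    rewrite sumC_S, H by lia. rewrite IH by lia. now rewrite Cplus_0_r.
Qed.

Lemma CS_finite (a:nat->C) N : (forall n, (N < n)%nat -> a n = 0%C) ->
  CS a (sum_n (G:=C_AbelianMonoid) a N).
Proof.
  intros H. apply (CS_bound _ _ (fun n => if (n <? N)%nat then
     Cmod (Cminus (sum_n (G:=C_AbelianMonoid) a n) (sum_n (G:=C_AbelianMonoid) a N)) else 0)).
  - intros n. destruct (Nat.ltb_spec n N). lra.
    rewrite (sum_stable a N H n) by lia. unfold Cminus. rewrite Cplus_opp_r, Cmod_0. lra.
  - intros eps Heps. exists N. intros n hn. destruct (Nat.ltb_spec n N). lia. lra.
Qed.

Lemma Cmod_sum_le (a : nat -> C) (b : nat -> R) :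
  (forall n, Cmod (a n) <= b n) -> forall n,
  Cmod (sum_n (G:=C_AbelianMonoid) a n) <= sum_n (G:=R_AbelianMonoid) b n.
Proof.
  intros H n. induction n.
  - rewrite sumC_0, sum_O. apply H.
  - rewrite sumC_S, sum_Sn. eapply Rle_trans. apply Cmod_triangle.
    change (plus (sum_n b n) (b (S n))) with (sum_n b n + b (S n)).
    apply Rplus_le_compat; auto.
Qed.

Lemma CS_norm_le (a:nat->C) l (b:nat->R) L :
  CS a l -> (forall n, Cmod (a n) <= b n) -> is_series b L -> Cmod l <= L.
Proof.
  intros Ha Hb HL. destruct (Rle_dec (Cmod l) L) as [h|h]; auto. exfalso.
  set (eps := (Cmod l - L)/2). assert (Heps: 0 < eps) by (unfold eps; lra).
  unfold is_series in Ha, HL.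
  pose proof (proj1 (filterlim_locally_ball_norm (K:=C_AbsRing) (U:=C_NormedModule) (F:=eventually) _ _) Ha) as Ha'. pose proof (proj1 (filterlim_locally_ball_norm (K:=R_AbsRing) (U:=R_NormedModule) (F:=eventually) _ _) HL) as HL'. clear Ha HL. rename Ha' into Ha. rename HL' into HL.
  specialize (Ha (mkposreal _ Heps)). specialize (HL (mkposreal _ Heps)).
  destruct Ha as [N1 H1]. destruct HL as [N2 H2].
  specialize (H1 (N1+N2)%nat ltac:(lia)). specialize (H2 (N1+N2)%nat ltac:(lia)).
  unfold ball_norm in H1, H2. simpl in H1, H2.
  pose proof (Cmod_sum_le a b Hb (N1+N2)).
  change (norm (minus (sum_n b (N1 + N2)) L)) with (Rabs (sum_n b (N1+N2) - L)) in H2.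
  change (norm (minus (sum_n a (N1 + N2)) l)) with (Cmod (Cminus (sum_n (G:=C_AbelianMonoid) a (N1+N2)) l)) in H1.
  assert (Cmod l <= Cmod (sum_n (G:=C_AbelianMonoid) a (N1+N2)) + Cmod (Cminus (sum_n (G:=C_AbelianMonoid) a (N1+N2)) l)).
  { rewrite <- Cmod_opp with (x := Cminus _ l).
    replace l with (Cplus (sum_n (G:=C_AbelianMonoid) a (N1 + N2)) (Copp (Cminus (sum_n (G:=C_AbelianMonoid) a (N1 + N2)) l))) at 1 by ring.
    apply Cmod_triangle. }
  apply Rabs_def2 in H2. unfold eps in *. lra.
Qed.


Lemma CS_terms_bounded (a:nat->C) l : CS a l -> exists M, forall n, Cmod (a n) <= M.
Proof.
  intros Ha.
  pose proof (proj1 (filterlim_locally_ball_norm (K:=C_AbsRing) (U:=C_NormedModule) (F:=eventually) _ _) Ha) as H.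
  destruct (H (mkposreal 1 Rlt_0_1)) as [N HN]. unfold ball_norm in HN. simpl in HN.
  exists (2 + sum_f_R0 (fun k => Cmod (a k)) N).
  assert (Hpos: forall n, 0 <= sum_f_R0 (fun k => Cmod (a k)) n).
  { intros n. induction n; simpl. apply Cmod_ge_0. pose proof (Cmod_ge_0 (a (S n))). lra. }
  intros n. destruct (le_gt_dec n N) as [h|h].
  - assert (Cmod (a n) <= sum_f_R0 (fun k => Cmod (a k)) N).
    { clear HN H. induction N.
      + assert (n=0%nat) by lia. subst. simpl. lra.
      + destruct (Nat.eq_dec n (S N)). subst. simpl. specialize (Hpos N). lra.
        simpl. pose proof (Cmod_ge_0 (a (S N))). specialize (IHN ltac:(lia)). lra. }
    lra.
  - destruct n as [|n]. lia.
    pose proof (HN (S n) ltac:(lia)). pose proof (HN n ltac:(lia)).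
    change (norm (minus (sum_n a (S n)) l)) with (Cmod (Cminus (sum_n (G:=C_AbelianMonoid) a (S n)) l)) in H0.
    change (norm (minus (sum_n a n) l)) with (Cmod (Cminus (sum_n (G:=C_AbelianMonoid) a n) l)) in H1.
    rewrite sumC_S in H0.
    assert (a (S n) = Cminus (Cminus (Cplus (sum_n (G:=C_AbelianMonoid) a n) (a (S n))) l) (Cminus (sum_n (G:=C_AbelianMonoid) a n) l)) by ring.
    rewrite H2. eapply Rle_trans. unfold Cminus at 1. apply Cmod_triangle. rewrite Cmod_opp.
    specialize (Hpos N). lra.
Qed.

Lemma CV_radius_one : CV_radius (fun _ => 1) = 1.
Proof.
  rewrite (CV_radius_finite_DAlembert _ 1).
  - simpl. replace (/ 1) with 1 by field. reflexivity.
  - intros; lra.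
  - lra.
  - eapply is_lim_seq_ext. 2: apply is_lim_seq_const. intros n. simpl. rewrite Rdiv_1_r, Rabs_R1. reflexivity.
Qed.

Lemma ex_series_n1 (q:R) : 0 <= q < 1 -> ex_series (fun n => INR (S n) * q ^ n).
Proof.
  intros Hq. assert (H: Rbar_lt (Rabs q) (CV_radius (fun _ => 1))).
  { rewrite CV_radius_one. simpl. rewrite Rabs_pos_eq; lra. }
  apply ex_pseries_derive in H. apply ex_pseries_R in H. revert H. apply ex_series_ext.
  intros n. unfold PS_derive. rewrite Rmult_1_r. reflexivity.
Qed.

Lemma ex_series_n2 (q:R) : 0 <= q < 1 -> ex_series (fun n => INR (S n) * INR (S (S n)) * q ^ n).
Proof.
  intros Hq. assert (H: Rbar_lt (Rabs q) (CV_radius (PS_derive (fun _ => 1)))).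
  { rewrite !CV_radius_derive, CV_radius_one. simpl. rewrite Rabs_pos_eq; lra. }
  apply ex_pseries_derive in H. apply ex_pseries_R in H. revert H. apply ex_series_ext.
  intros n. unfold PS_derive. rewrite Rmult_1_r, Rmult_assoc. reflexivity.
Qed.

Lemma ex_series_le_R (a b : nat -> R) : (forall n, 0 <= a n <= b n) -> ex_series b -> ex_series a.
Proof.
  intros H Hb. apply (ex_series_le (K:=R_AbsRing) (V:=R_CompleteNormedModule) a b); auto.
  intros n. change (norm (a n)) with (Rabs (a n)). rewrite Rabs_pos_eq; apply H.
Qed.


Definition Eterm (y z : C) (n : nat) : C :=
  Cminus (Cminus (Cpow y n) (Cpow z n)) (Cmult (Cmult (RtoC (INR n)) (Cpow z (pred n))) (Cminus y z)).

Lemma Eterm_rec y z n : Eterm y z (S n) =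
  Cplus (Cmult y (Eterm y z n)) (Cmult (Cmult (RtoC (INR n)) (Cpow z (pred n))) (Cmult (Cminus y z) (Cminus y z))).
Proof.
  unfold Eterm. destruct n as [|n].
  - simpl. ring.
  - change (pred (S (S n))) with (S n). change (pred (S n)) with n.
    rewrite !S_INR, !RtoC_plus. simpl. ring.
Qed.

Lemma Eterm_bound y z s n : 0 < s -> Cmod y <= s -> Cmod z <= s ->
  s * s * Cmod (Eterm y z n) <= INR n * INR n * s ^ n * (Cmod (Cminus y z) * Cmod (Cminus y z)).
Proof.
  intros Hs Hy Hz. set (d := Cmod (Cminus y z)). assert (Hd: 0 <= d) by apply Cmod_ge_0. assert (Hdd: Cmod (Cminus y z) = d) by reflexivity. clearbody d.
  induction n.
  - unfold Eterm. simpl. replace (Cminus (Cminus 1 1) (Cmult (Cmult 0 1) (Cminus y z))) with (RtoC 0) by ring.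
    rewrite Cmod_0. nra.
  - assert (H1: Cmod (Eterm y z (S n)) <= s * Cmod (Eterm y z n) + INR n * Cmod (Cpow z (pred n)) * (d*d)).
    { rewrite Eterm_rec. eapply Rle_trans. apply Cmod_triangle.
      rewrite !Cmod_mult, Cmod_R, Rabs_pos_eq by apply pos_INR.
      apply Rplus_le_compat. apply Rmult_le_compat_r. apply Cmod_ge_0. auto.
      rewrite Hdd. lra. }
    assert (H2: s * s * (INR n * Cmod (Cpow z (pred n))) <= INR n * s ^ (S n)).
    { destruct n. simpl. lra. simpl pred. rewrite Cmod_pow.
      assert (Cmod z ^ n <= s ^ n) by (apply pow_incr; split; [apply Cmod_ge_0|auto]).
      pose proof (pos_INR (S n)).
      replace (s ^ S (S n)) with (s * s * s^n) by (simpl; ring).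
      assert (0 <= s^n) by (apply pow_le; lra). assert (0 <= s*s) by nra.
      revert H0. generalize (INR (S n)). intros r Hr.
      assert (r * Cmod z ^ n <= r * s^n) by (apply Rmult_le_compat_l; lra). nra. }
    assert (H3: 0 <= Cmod (Eterm y z n)) by apply Cmod_ge_0.
    assert (0 <= s ^ n) by (apply pow_le; lra).
    replace (s ^ S n) with (s * s^n) in * by (simpl; ring).
    rewrite S_INR.
    assert (Hdd2: 0 <= d * d) by nra. pose proof (pos_INR n) as Hk.
    revert H3 H2 H1 IHn Hk. generalize (INR n) (Cmod (Eterm y z n)) (Cmod (Eterm y z (S n))) (Cmod (Cpow z (pred n))).
    intros k E0 E1 Z H3 H2 H1 IHn Hk.
    assert (A1: s*s*E1 <= s*s*(s*E0 + k*Z*(d*d))) by (apply Rmult_le_compat_l; nra).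
    assert (A2: s*(s*s*E0) <= s*(k*k*s^n*(d*d))) by (apply Rmult_le_compat_l; lra).
    assert (A3: s*s*(k*Z)*(d*d) <= k*(s*s^n)*(d*d)) by (apply Rmult_le_compat_r; lra).
    assert (A4: 0 <= k * (s*s^n) * (d*d)).
    { apply Rmult_le_pos; [|lra]. apply Rmult_le_pos; nra. }
    assert (A5: 0 <= (s*s^n) * (d*d)) by (apply Rmult_le_pos; nra).
    assert (A6: 0 <= k*k*(s*s^n) * (d*d)) by (apply Rmult_le_pos; [apply Rmult_le_pos|]; nra).
    nra.
Qed.

Lemma Cmod_RtoC_pos (r:R) : 0 <= r -> Cmod (RtoC r) = r.
Proof. intros. rewrite Cmod_R. apply Rabs_pos_eq; auto. Qed.

Lemma ps_derive (a:nat->C) (f:C->C) :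
  (forall w, Cmod w < 1 -> CS (fun n => Cmult (a n) (Cpow w n)) (f w)) ->
  forall z, Cmod z < 1 -> exists l,
    CS (fun n => Cmult (Cmult (RtoC (INR n)) (a n)) (Cpow z (pred n))) l /\
    is_derive (K:=C_AbsRing) (V:=C_NormedModule) f z l.
Proof.
  intros Hf z Hz. assert (Hrho: 0 <= Cmod z) by apply Cmod_ge_0.
  remember (Cmod z) as rho eqn:Hrhod.
  remember ((1+rho)/2) as s eqn:Hsd. remember ((3+rho)/4) as t eqn:Htd.
  assert (Hs: 0 < s) by lra. assert (Hst: s < t) by lra.
  assert (Ht1: t < 1) by lra. assert (Hrs: rho < s) by lra.
  assert (Ht: 0 < t) by lra.
  destruct (CS_terms_bounded _ _ (Hf (RtoC t) ltac:(rewrite Cmod_RtoC_pos; lra))) as [M HM].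
  remember (s / t) as q eqn:Hqd. assert (Hq: 0 <= q < 1).
  { rewrite Hqd. split. apply Rlt_le, Rdiv_lt_0_compat; lra. unfold Rdiv; apply (Rmult_lt_reg_r t); [lra|]; rewrite Rmult_assoc, Rinv_l by lra; lra. }
  assert (HaM: forall n, Cmod (a n) * s ^ n <= M * q ^ n).
  { intros n. specialize (HM n). rewrite Cmod_mult, Cmod_pow, Cmod_RtoC_pos in HM by lra.
    assert (Hqt: s = q * t) by (rewrite Hqd; field; lra).
    rewrite Hqt, Rpow_mult_distr.
    assert (0 <= q ^ n) by (apply pow_le; lra).
    replace (Cmod (a n) * (q ^ n * t ^ n)) with ((Cmod (a n) * t ^ n) * q ^ n) by ring.
    apply Rmult_le_compat_r; lra. }
  assert (HM0: 0 <= M) by (pose proof (HaM 0%nat) as H0; pose proof (Cmod_ge_0 (a 0%nat)); rewrite !pow_O in H0; lra).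
  assert (Hex: ex_series (K:=C_AbsRing) (V:=C_CompleteNormedModule)
                 (fun n => Cmult (Cmult (RtoC (INR n)) (a n)) (Cpow z (pred n)))).
  { apply (ex_series_le (K:=C_AbsRing) (V:=C_CompleteNormedModule) _ (fun n => M / s * (INR (S n) * q ^ n))).
    - intros n. change (norm (Cmult (Cmult (RtoC (INR n)) (a n)) (Cpow z (pred n)))) with
        (Cmod (Cmult (Cmult (RtoC (INR n)) (a n)) (Cpow z (pred n)))).
      rewrite !Cmod_mult, Cmod_pow, Cmod_RtoC_pos by apply pos_INR. rewrite <- Hrhod.
      destruct n as [|n].
      + simpl. assert (0 <= M / s * (1 * 1)) by (apply Rmult_le_pos; [apply Rdiv_le_0_compat|]; lra). lra.
      + simpl pred. pose proof (HaM (S n)) as H. simpl in H.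
        assert (rho ^ n <= s ^ n) by (apply pow_incr; lra).
        assert (0 <= rho ^ n) by (apply pow_le; lra).
        assert (0 <= q ^ S n) by (apply pow_le; lra).
        pose proof (pos_INR (S n)). pose proof (pos_INR (S (S n))).
        assert (INR (S n) <= INR (S (S n))) by (apply le_INR; lia).
        assert (Cmod (a (S n)) * rho ^ n <= M / s * q ^ S n).
        { apply (Rmult_le_reg_l s); auto. replace (s * (M / s * q ^ S n)) with (M * q ^ S n) by (field; lra).
          eapply Rle_trans. 2: exact H. pose proof (Cmod_ge_0 (a (S n))).
          assert (Cmod (a (S n)) * rho^n <= Cmod (a (S n)) * s^n) by (apply Rmult_le_compat_l; lra). nra. }
        assert (0 <= M / s * q ^ S n) by (apply Rmult_le_pos; [apply Rdiv_le_0_compat|]; lra).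
        revert H0 H1 H2 H3 H4 H5 H6 H7. generalize (INR (S n)) (INR (S (S n))). intros. nra.
    - apply (ex_series_scal (K:=R_AbsRing) (V:=R_NormedModule) (M/s)). apply ex_series_n1. lra. }
  destruct Hex as [l Hl]. exists l. split. exact Hl.
  assert (HexK: ex_series (fun n => M / (s*s) * (INR (S n) * INR (S (S n)) * q ^ n))).
  { apply (ex_series_scal (K:=R_AbsRing) (V:=R_NormedModule) (M/(s*s))). apply ex_series_n2. lra. }
  remember (Series (fun n => M / (s*s) * (INR (S n) * INR (S (S n)) * q ^ n))) as K eqn:HKd.
  assert (HK: is_series (fun n => M / (s*s) * (INR (S n) * INR (S (S n)) * q ^ n)) K).
  { rewrite HKd. apply Series_correct. exact HexK. }
  unfold is_derive, filterdiff. split. apply is_linear_scal_l.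
  intros x Hx. pose proof (is_filter_lim_locally_unique (K:=C_AbsRing) (V:=AbsRing_NormedModule C_AbsRing) z x Hx) as Hzx. subst x.
  intros eps.
  assert (Hdel: 0 < Rmin (s - rho) (eps / (Rabs K + 1))).
  { apply Rmin_pos. lra. apply Rdiv_lt_0_compat. apply cond_pos. pose proof (Rabs_pos K). lra. }
  exists (mkposreal _ Hdel). intros y Hy.
  change (Cmod (Cminus y z) < Rmin (s - rho) (eps / (Rabs K + 1))) in Hy.
  change (norm (minus y z)) with (Cmod (Cminus y z)).
  change (norm (minus (minus (f y) (f z)) (scal (minus y z) l))) with
    (Cmod (Cminus (Cminus (f y) (f z)) (Cmult (Cminus y z) l))).
  remember (Cmod (Cminus y z)) as D eqn:HDd.
  assert (HD0: 0 <= D) by (rewrite HDd; apply Cmod_ge_0).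
  assert (HD1: D < s - rho) by (pose proof (Rmin_l (s-rho) (eps / (Rabs K + 1))); lra).
  assert (HD2: D < eps / (Rabs K + 1)) by (pose proof (Rmin_r (s-rho) (eps / (Rabs K + 1))); lra).
  assert (Hys: Cmod y <= s).
  { replace y with (Cplus z (Cminus y z)) by ring. eapply Rle_trans. apply Cmod_triangle. lra. }
  assert (Hzs: Cmod z <= s) by lra.
  assert (Hy1: Cmod y < 1) by lra.
  assert (Hser: CS (fun n => Cmult (a n) (Eterm y z n)) (Cminus (Cminus (f y) (f z)) (Cmult (Cminus y z) l))).
  { pose proof (is_series_minus _ _ _ _ (Hf y Hy1) (Hf z ltac:(lra))) as H1.
    pose proof (is_series_scal (K:=C_AbsRing) (V:=C_NormedModule) (Cminus y z) _ _ Hl) as H2.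
    pose proof (is_series_minus _ _ _ _ H1 H2) as H3.
    revert H3. apply is_series_ext. intros n. unfold Eterm.
    change (plus (plus (Cmult (a n) (Cpow y n)) (opp (Cmult (a n) (Cpow z n))))
     (opp (scal (Cminus y z) (Cmult (Cmult (RtoC (INR n)) (a n)) (Cpow z (pred n))))))
     with (Cplus (Cplus (Cmult (a n) (Cpow y n)) (Copp (Cmult (a n) (Cpow z n))))
     (Copp (Cmult (Cminus y z) (Cmult (Cmult (RtoC (INR n)) (a n)) (Cpow z (pred n)))))).
    match goal with |- ?A = ?B => change (@eq C A B) end. ring. }
  assert (Hb: forall n, Cmod (Cmult (a n) (Eterm y z n)) <= M / (s*s) * (INR (S n) * INR (S (S n)) * q ^ n) * (D*D)).
  { intros n. rewrite Cmod_mult. pose proof (Eterm_bound y z s n Hs Hys Hzs) as HE. rewrite <- HDd in HE.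
    pose proof (HaM n). pose proof (Cmod_ge_0 (a n)). pose proof (Cmod_ge_0 (Eterm y z n)).
    assert (0 <= s^n) by (apply pow_le; lra). assert (0 <= q^n) by (apply pow_le; lra).
    assert (INR n <= INR (S n)) by (apply le_INR; lia). assert (INR (S n) <= INR (S (S n))) by (apply le_INR; lia).
    pose proof (pos_INR n).
    assert (Hss: 0 < s*s) by nra.
    assert (s*s*(Cmod (a n) * Cmod (Eterm y z n)) <= M * q^n * (INR n * INR n) * (D*D)).
    { replace (s*s*(Cmod (a n) * Cmod (Eterm y z n))) with (Cmod (a n) * (s*s*Cmod (Eterm y z n))) by ring.
      eapply Rle_trans. apply Rmult_le_compat_l. lra. exact HE.
      replace (Cmod (a n) * (INR n * INR n * s ^ n * (D * D))) with ((Cmod (a n) * s^n) * ((INR n * INR n) * (D*D))) by ring.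
      replace (M * q^n * (INR n * INR n) * (D*D)) with ((M*q^n) * ((INR n * INR n) * (D*D))) by ring.
      apply Rmult_le_compat_r. apply Rmult_le_pos; nra. lra. }
    apply (Rmult_le_reg_l (s*s)). exact Hss.
    replace (s * s * (M / (s * s) * (INR (S n) * INR (S (S n)) * q ^ n) * (D * D))) with
      (M * q^n * (INR (S n) * INR (S (S n))) * (D*D)) by (field; lra).
    eapply Rle_trans. exact H7.
    assert (INR n * INR n <= INR (S n) * INR (S (S n))) by (apply Rmult_le_compat; lra).
    assert (0 <= M*q^n) by nra. assert (0 <= D*D) by nra.
    apply Rmult_le_compat_r. lra. apply Rmult_le_compat_l; lra. }
  pose proof (CS_norm_le _ _ _ _ Hser Hb (is_series_scal_r _ _ _ HK)) as Hfin.
  simpl in Hfin.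
  assert (K * (D*D) <= Rabs K * D * D) by (pose proof (Rle_abs K); nra).
  assert (Rabs K * D <= eps).
  { apply (Rmult_lt_compat_l (Rabs K + 1)) in HD2. 2: (pose proof (Rabs_pos K); lra).
    replace ((Rabs K + 1) * (eps / (Rabs K + 1))) with (pos eps) in HD2 by (field; pose proof (Rabs_pos K); lra).
    nra. }
  nra.
Qed.


Definition cc (a : nat -> C) (beta : R) (j : nat) : C :=
  Cmult (a (S j)) (RtoC (INR (S j) - INR j * beta)).

Ltac Ceq := match goal with |- ?A = ?B => change (@eq C A B) end.

Lemma combine (a:nat->C) (F L z : C) (beta : R) :
  CS (fun n => Cmult (a n) (Cpow z n)) F -> a 0%nat = RtoC 0 ->
  CS (fun n => Cmult (Cmult (RtoC (INR n)) (a n)) (Cpow z (pred n))) L -> z <> RtoC 0 ->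
  CS (fun j => Cmult (cc a beta j) (Cpow z j))
     (Cplus (Cmult (RtoC beta) (Cdiv F z)) (Cmult (RtoC (1 - beta)) L)).
Proof.
  intros HF Ha0 HL Hz.
  assert (H1: CS (fun k => Cmult (a (S k)) (Cpow z (S k))) F).
  { apply (is_series_incr_1 (K:=C_AbsRing) (V:=C_NormedModule) (fun n => Cmult (a n) (Cpow z n))).
    match goal with |- CS _ ?X => replace X with F end. exact HF.
    rewrite Ha0. change (F = Cplus F (Cmult 0 (Cpow z 0))). ring. }
  assert (H2: CS (fun k => Cmult (Cmult (RtoC (INR (S k))) (a (S k))) (Cpow z k)) L).
  { apply (is_series_incr_1 (K:=C_AbsRing) (V:=C_NormedModule) (fun n => Cmult (Cmult (RtoC (INR n)) (a n)) (Cpow z (pred n)))).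
    match goal with |- CS _ ?X => replace X with L end. exact HL.
    rewrite Ha0. change (L = Cplus L (Cmult (Cmult (RtoC (INR 0)) 0) (Cpow z (pred 0)))). ring. }
  pose proof (is_series_scal (K:=C_AbsRing) (V:=C_NormedModule) (Cmult (RtoC beta) (Cinv z)) _ _ H1) as H3.
  pose proof (is_series_scal (K:=C_AbsRing) (V:=C_NormedModule) (RtoC (1-beta)) _ _ H2) as H4.
  pose proof (is_series_plus _ _ _ _ H3 H4) as H5.
  replace (Cplus (Cmult (RtoC beta) (Cdiv F z)) (Cmult (RtoC (1 - beta)) L)) with
    (plus (scal (Cmult (RtoC beta) (Cinv z)) F) (scal (RtoC (1-beta)) L)).
  2: { change (Cplus (Cmult (Cmult (RtoC beta) (Cinv z)) F) (Cmult (RtoC (1-beta)) L) =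
               Cplus (Cmult (RtoC beta) (Cdiv F z)) (Cmult (RtoC (1 - beta)) L)). field. auto. }
  revert H5. apply is_series_ext. intros n. unfold cc.
  change (Cplus (Cmult (Cmult (RtoC beta) (Cinv z)) (Cmult (a (S n)) (Cpow z (S n))))
     (Cmult (RtoC (1-beta)) (Cmult (Cmult (RtoC (INR (S n))) (a (S n))) (Cpow z n))) =
     Cmult (Cmult (a (S n)) (RtoC (INR (S n) - INR n * beta))) (Cpow z n)).
  rewrite !S_INR. rewrite !RtoC_minus, !RtoC_plus, !RtoC_mult. simpl Cpow. field. auto.
Qed.


Fixpoint csum (m:nat) (f:nat -> C) : C :=
  match m with O => RtoC 0 | S n => Cplus (csum n f) (f n) end.

Lemma csum_ext m f g : (forall k, (k < m)%nat -> f k = g k) -> csum m f = csum m g.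
Proof. induction m; intros H; simpl; auto. rewrite IHm, H; auto. Qed.

Lemma csum_plus m f g : csum m (fun k => Cplus (f k) (g k)) = Cplus (csum m f) (csum m g).
Proof. induction m; simpl. ring. rewrite IHm. ring. Qed.

Lemma csum_scal m c f : csum m (fun k => Cmult c (f k)) = Cmult c (csum m f).
Proof. induction m; simpl. ring. rewrite IHm. ring. Qed.

Lemma csum_const1 m : csum m (fun _ => RtoC 1) = RtoC (INR m).
Proof. induction m; simpl csum. reflexivity. rewrite IHm, S_INR, RtoC_plus. reflexivity. Qed.

Lemma csum_geom m u : Cmult (csum m (fun k => Cpow u k)) (Cminus u 1) = Cminus (Cpow u m) 1.
Proof. induction m; simpl. ring. rewrite Cmult_plus_distr_r, IHm. ring. Qed.

Definition omega (m:nat) : C := (cos (2*PI/INR m), sin (2*PI/INR m)).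

Lemma omega_pow m k : Cpow (omega m) k = (cos (INR k * (2*PI/INR m)), sin (INR k * (2*PI/INR m))).
Proof.
  induction k.
  - simpl. rewrite Rmult_0_l, cos_0, sin_0. reflexivity.
  - rewrite Cpow_S, IHk. unfold omega. rewrite S_INR.
    replace ((INR k + 1) * (2 * PI / INR m)) with (INR k * (2 * PI / INR m) + 2*PI/INR m) by ring.
    rewrite cos_plus, sin_plus. unfold Cmult. simpl. f_equal; ring.
Qed.

Lemma Cmod_omega_pow m k : Cmod (Cpow (omega m) k) = 1.
Proof.
  rewrite omega_pow. unfold Cmod. simpl. rewrite !Rmult_1_r.
  pose proof (sin2_cos2 (INR k * (2 * PI / INR m))) as H. unfold Rsqr in H.
  rewrite Rplus_comm, H. apply sqrt_1.
Qed.

Lemma omega_m m : (0 < m)%nat -> Cpow (omega m) m = RtoC 1.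
Proof.
  intros Hm. rewrite omega_pow. replace (INR m * (2 * PI / INR m)) with (2*PI).
  rewrite cos_2PI, sin_2PI. reflexivity.
  field. apply not_0_INR. lia.
Qed.

Lemma omega_ne1 m n : (0 < n < m)%nat -> Cpow (omega m) n <> RtoC 1.
Proof.
  intros Hn Heq. rewrite omega_pow in Heq. injection Heq as Hc Hs.
  set (x := INR n * (2 * PI / INR m)) in *.
  assert (Hx: 0 < x / 2 < PI).
  { unfold x. assert (0 < INR n) by (apply lt_0_INR; lia).
    assert (INR n < INR m) by (apply lt_INR; lia). pose proof PI_RGT_0.
    split. apply Rdiv_lt_0_compat; [|lra]. apply Rmult_lt_0_compat; auto. apply Rdiv_lt_0_compat; lra.
    replace (INR n * (2 * PI / INR m) / 2) with (PI * (INR n / INR m)) by (field; lra).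
    rewrite <- (Rmult_1_r PI) at 2. apply Rmult_lt_compat_l. lra.
    apply (Rmult_lt_reg_r (INR m)). lra. unfold Rdiv. rewrite Rmult_assoc, Rinv_l; lra. }
  pose proof (sin_gt_0 _ (proj1 Hx) (proj2 Hx)).
  replace x with (2 * (x/2)) in Hc by field. rewrite cos_2a_sin in Hc.
  assert (sin (x/2) * sin (x/2) > 0) by (apply Rmult_gt_0_compat; auto). lra.
Qed.

Lemma rootsum m N : (0 < m)%nat ->
  csum m (fun k => Cpow (Cpow (omega m) k) N) =
  if (N mod m =? 0)%nat then RtoC (INR m) else RtoC 0.
Proof.
  intros Hm.
  assert (E: forall k, Cpow (Cpow (omega m) k) N = Cpow (Cpow (omega m) N) k).
  { intros k. rewrite <- !Cpow_mult_r. rewrite Nat.mul_comm. reflexivity. }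
  rewrite (csum_ext m _ _ (fun k _ => E k)).
  assert (Hum: Cpow (Cpow (omega m) N) m = RtoC 1).
  { rewrite <- Cpow_mult_r, Nat.mul_comm, Cpow_mult_r, omega_m by auto. apply Cpow_1_l. }
  assert (HN: Cpow (omega m) N = Cpow (omega m) (N mod m)).
  { rewrite (Nat.div_mod_eq N m) at 1. rewrite Cpow_add_r, Cpow_mult_r, omega_m, Cpow_1_l by auto. ring. }
  destruct (Nat.eqb_spec (N mod m) 0) as [h|h].
  - rewrite HN, h. simpl Cpow. rewrite (csum_ext m _ (fun _ => RtoC 1)). apply csum_const1.
    intros; apply Cpow_1_l.
  - assert (Hne: Cminus (Cpow (omega m) N) 1 <> RtoC 0).
    { intros H0. apply (omega_ne1 m (N mod m)). split. lia. apply Nat.mod_upper_bound. lia.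
      rewrite <- HN. apply Ceq_minus. exact H0. }
    pose proof (csum_geom m (Cpow (omega m) N)) as G. rewrite Hum in G.
    replace (Cminus 1 1) with (RtoC 0) in G by ring.
    set (S := csum m _) in *. clearbody S.
    replace S with (Cmult (Cmult S (Cminus (Cpow (omega m) N) 1)) (Cinv (Cminus (Cpow (omega m) N) 1))) by (field; auto).
    rewrite G. ring.
Qed.


Lemma CS_csum m (g : nat -> nat -> C) (Gv : nat -> C) :
  (forall k, (k < m)%nat -> CS (g k) (Gv k)) ->
  CS (fun j => csum m (fun k => g k j)) (csum m Gv).
Proof.
  induction m; intros H; simpl.
  - pose proof (CS_finite (fun _ => RtoC 0) 0 (fun _ _ => eq_refl)) as H0.
    rewrite sumC_0 in H0. exact H0.
  - pose proof (is_series_plus _ _ _ _ (IHm (fun k hk => H k ltac:(lia))) (H m ltac:(lia))) as H0.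
    exact H0.
Qed.

Lemma Re_csum_nonneg m f : (forall k, (k < m)%nat -> 0 <= Re (f k)) -> 0 <= Re (csum m f).
Proof.
  induction m; intros H; simpl csum. simpl. lra.
  rewrite re_plus. pose proof (H m ltac:(lia)). pose proof (IHm (fun k hk => H k ltac:(lia))). lra.
Qed.

Definition dlt (m N : nat) : C := if (N mod m =? 0)%nat then RtoC 1 else RtoC 0.

Definition Wj (m : nat) (x0 x1 x2 y0 y1 y2 : C) (j : nat) : C :=
  Cplus (Cplus (Cplus (Cmult (Cmult x0 y0) (dlt m (j + 0 + (m-1)*0)))
                      (Cmult (Cmult x0 y1) (dlt m (j + 0 + (m-1)*1))))
               (Cplus (Cmult (Cmult x0 y2) (dlt m (j + 0 + (m-1)*2)))
                      (Cmult (Cmult x1 y0) (dlt m (j + 1 + (m-1)*0)))))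
   (Cplus (Cplus (Cmult (Cmult x1 y1) (dlt m (j + 1 + (m-1)*1)))
                 (Cmult (Cmult x1 y2) (dlt m (j + 1 + (m-1)*2))))
          (Cplus (Cmult (Cmult x2 y0) (dlt m (j + 2 + (m-1)*0)))
                 (Cplus (Cmult (Cmult x2 y1) (dlt m (j + 2 + (m-1)*1)))
                        (Cmult (Cmult x2 y2) (dlt m (j + 2 + (m-1)*2)))))).

Lemma mod_ne0 m N k : (0 < m)%nat -> (k*m < N < (k+1)*m)%nat -> (N mod m =? 0)%nat = false.
Proof.
  intros Hm HN. apply Nat.eqb_neq. intros H.
  apply Nat.Div0.mod_divides in H. destruct H as [q Hq].
  assert (q <= k \/ k + 1 <= q)%nat as [h|h] by lia.
  - assert (m * q <= m * k)%nat by (apply Nat.mul_le_mono_l; auto). lia.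
  - assert (m * (k+1) <= m * q)%nat by (apply Nat.mul_le_mono_l; auto). lia.
Qed.

Lemma dlt_small m j a b : (5 <= m)%nat -> (j + 2 < m)%nat -> (a <= 2)%nat -> (b <= 2)%nat ->
  dlt m (j + a + (m-1)*b) = if (j + a =? b)%nat then RtoC 1 else RtoC 0.
Proof.
  intros Hm Hj Ha Hb. unfold dlt.
  destruct (Nat.eqb_spec (j+a) b) as [h|h].
  - replace (j + a + (m-1)*b)%nat with (b*m)%nat by (rewrite h; destruct m; [lia|]; simpl; nia).
    rewrite Nat.Div0.mod_mul. reflexivity.
  - assert (j + a < b \/ b < j + a)%nat as [h2|h2] by lia.
    + rewrite (mod_ne0 m _ (b-1)). reflexivity. lia.
      destruct b. lia. destruct m. lia. simpl. nia.
    + rewrite (mod_ne0 m _ b). reflexivity. lia.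
      destruct m. lia. simpl. nia.
Qed.

Lemma Wj_0 m x0 x1 x2 y0 y1 y2 : (5 <= m)%nat ->
  Wj m x0 x1 x2 y0 y1 y2 0 = Cplus (Cplus (Cmult x0 y0) (Cmult x1 y1)) (Cmult x2 y2).
Proof. intros Hm. unfold Wj. rewrite !dlt_small by lia. cbn [Nat.eqb Nat.add]. ring. Qed.

Lemma Wj_1 m x0 x1 x2 y0 y1 y2 : (5 <= m)%nat ->
  Wj m x0 x1 x2 y0 y1 y2 1 = Cplus (Cmult x0 y1) (Cmult x1 y2).
Proof. intros Hm. unfold Wj. rewrite !dlt_small by lia. cbn [Nat.eqb Nat.add]. ring. Qed.

Lemma Wj_2 m x0 x1 x2 y0 y1 y2 : (5 <= m)%nat ->
  Wj m x0 x1 x2 y0 y1 y2 2 = Cmult x0 y2.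
Proof. intros Hm. unfold Wj. rewrite !dlt_small by lia. cbn [Nat.eqb Nat.add]. ring. Qed.

Lemma Wj_mid m x0 x1 x2 y0 y1 y2 j : (5 <= m)%nat -> (3 <= j)%nat -> (j + 2 < m)%nat ->
  Wj m x0 x1 x2 y0 y1 y2 j = RtoC 0.
Proof.
  intros Hm Hj Hjm. unfold Wj. rewrite !dlt_small by lia.
  repeat match goal with |- context [(?x =? ?y)%nat] => destruct (Nat.eqb_spec x y); [lia|] end.
  ring.
Qed.

Lemma Cmod_plus_le a b A B : Cmod a <= A -> Cmod b <= B -> Cmod (Cplus a b) <= A + B.
Proof. intros. eapply Rle_trans. apply Cmod_triangle. lra. Qed.

Lemma Cmod_dlt_term x y m N : Cmod (Cmult (Cmult x y) (dlt m N)) <= Cmod x * Cmod y.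
Proof.
  rewrite !Cmod_mult. unfold dlt. destruct (N mod m =? 0)%nat.
  - rewrite Cmod_1. lra.
  - rewrite Cmod_0. pose proof (Cmod_ge_0 x). pose proof (Cmod_ge_0 y). nra.
Qed.

Lemma Wj_bound m x0 x1 x2 y0 y1 y2 j :
  Cmod (Wj m x0 x1 x2 y0 y1 y2 j) <=
  (Cmod x0 + Cmod x1 + Cmod x2) * (Cmod y0 + Cmod y1 + Cmod y2).
Proof.
  eapply Rle_trans. unfold Wj.
  repeat apply Cmod_plus_le; apply Cmod_dlt_term.
  right. ring.
Qed.

Lemma powN (u : C) j a b m :
  Cpow u (j + a + (m-1)*b) = Cmult (Cmult (Cpow u j) (Cpow u a)) (Cpow (Cpow u (m-1)) b).
Proof. rewrite !Cpow_add_r, Cpow_mult_r. reflexivity. Qed.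

Definition Pk (m : nat) (x0 x1 x2 : C) (k : nat) : C :=
  Cplus (Cplus x0 (Cmult x1 (Cpow (omega m) k))) (Cmult x2 (Cpow (Cpow (omega m) k) 2)).
Definition Qk (m : nat) (y0 y1 y2 : C) (k : nat) : C :=
  Cplus (Cplus y0 (Cmult y1 (Cpow (Cpow (omega m) k) (m-1)))) (Cmult y2 (Cpow (Cpow (Cpow (omega m) k) (m-1)) 2)).

Lemma expand m x0 x1 x2 y0 y1 y2 (c:C) (r:R) j : (0 < m)%nat ->
  csum m (fun k => Cmult (Cmult c (Cpow (Cmult (RtoC r) (Cpow (omega m) k)) j))
                         (Cmult (Pk m x0 x1 x2 k) (Qk m y0 y1 y2 k)))
  = Cmult (Cmult (Cmult c (RtoC (r^j))) (RtoC (INR m))) (Wj m x0 x1 x2 y0 y1 y2 j).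
Proof.
  intros Hm.
  set (T := fun N => csum m (fun k => Cpow (Cpow (omega m) k) N)).
  assert (HT: forall N, T N = Cmult (RtoC (INR m)) (dlt m N)).
  { intros N. unfold T. rewrite rootsum by auto. unfold dlt. destruct (N mod m =? 0)%nat; ring. }
  transitivity (Cmult (Cmult c (RtoC (r^j)))
   (Cplus (Cplus (Cplus (Cmult (Cmult x0 y0) (T (j + 0 + (m-1)*0)%nat))
                      (Cmult (Cmult x0 y1) (T (j + 0 + (m-1)*1)%nat)))
               (Cplus (Cmult (Cmult x0 y2) (T (j + 0 + (m-1)*2)%nat))
                      (Cmult (Cmult x1 y0) (T (j + 1 + (m-1)*0)%nat))))
   (Cplus (Cplus (Cmult (Cmult x1 y1) (T (j + 1 + (m-1)*1)%nat))
                 (Cmult (Cmult x1 y2) (T (j + 1 + (m-1)*2)%nat)))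
          (Cplus (Cmult (Cmult x2 y0) (T (j + 2 + (m-1)*0)%nat))
                 (Cplus (Cmult (Cmult x2 y1) (T (j + 2 + (m-1)*1)%nat))
                        (Cmult (Cmult x2 y2) (T (j + 2 + (m-1)*2)%nat))))))).
  2: { rewrite !HT. unfold Wj. ring. }
  unfold T. rewrite <- !csum_scal, <- !csum_plus, <- csum_scal.
  apply csum_ext. intros k _. rewrite !powN. unfold Pk, Qk.
  rewrite Cpow_mult_l, <- RtoC_pow. simpl Cpow. ring.
Qed.

Lemma conj_omega_pow m k : (0 < m)%nat ->
  Cconj (Cpow (omega m) k) = Cpow (Cpow (omega m) k) (m-1).
Proof.
  intros Hm. set (u := Cpow (omega m) k).
  assert (H1: Cmult (Cpow u (m-1)) u = RtoC 1).
  { replace (Cmult (Cpow u (m-1)) u) with (Cpow u (S (m-1))) by (simpl; ring).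
    replace (S (m-1)) with m by lia. unfold u. rewrite <- Cpow_mult_r, Nat.mul_comm, Cpow_mult_r, omega_m by auto.
    apply Cpow_1_l. }
  assert (H2: Cmult u (Cconj u) = RtoC 1).
  { rewrite <- Cmod2_conj. unfold u. rewrite Cmod_omega_pow. simpl. f_equal; ring. }
  transitivity (Cmult (Cconj u) (Cmult (Cpow u (m-1)) u)). rewrite H1. ring.
  transitivity (Cmult (Cmult u (Cconj u)) (Cpow u (m-1))). ring. rewrite H2. ring.
Qed.

Lemma Qk_conj m x0 x1 x2 k : (0 < m)%nat ->
  Qk m (Cconj x0) (Cconj x1) (Cconj x2) k = Cconj (Pk m x0 x1 x2 k).
Proof.
  intros Hm. unfold Qk, Pk. rewrite !Cplus_conj, !Cmult_conj, (Cpow_conj (Cpow (omega m) k) 2), conj_omega_pow by auto.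
  reflexivity.
Qed.

Definition mainQ (c : nat -> C) (r : R) (x0 x1 x2 : C) : C :=
  Cplus (Cplus (Cmult (c 0%nat) (Cplus (Cplus (Cmult x0 (Cconj x0)) (Cmult x1 (Cconj x1))) (Cmult x2 (Cconj x2))))
               (Cmult (Cmult (c 1%nat) (RtoC r)) (Cplus (Cmult x0 (Cconj x1)) (Cmult x1 (Cconj x2)))))
        (Cmult (Cmult (c 2%nat) (RtoC (r^2))) (Cmult x0 (Cconj x2))).

Lemma pow_le_shift (s:R) n j : 0 <= s <= 1 -> (n <= j)%nat -> s ^ j <= s ^ n.
Proof.
  intros Hs Hnj. replace j with (n + (j - n))%nat by lia. rewrite pow_add.
  assert (0 <= s^n) by (apply pow_le; lra).
  assert (s^(j-n) <= 1) by (rewrite <- (pow1 (j-n)); apply pow_incr; lra).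
  assert (0 <= s^(j-n)) by (apply pow_le; lra). nra.
Qed.

Lemma toep_m (c : nat -> C) (G : C -> C) (Hc0: c 0%nat = RtoC 1)
  (HG: forall z, 0 < Cmod z < 1 -> CS (fun j => Cmult (c j) (Cpow z j)) (G z) /\ 0 < Re (G z))
  (r : R) (Hr: 0 < r < 1) (x0 x1 x2 : C) (M sg : R) (Hsg: 0 <= sg < 1)
  (HcM: forall j, Cmod (c j) * r^j <= M * sg^j * sg^j) (m : nat) (Hm : (5 <= m)%nat) :
  - ((Cmod x0 + Cmod x1 + Cmod x2) * (Cmod x0 + Cmod x1 + Cmod x2) * M * sg^(m-2) / (1 - sg))
   <= Re (mainQ c r x0 x1 x2).
Proof.
  assert (Hm0: (0 < m)%nat) by lia.
  set (y0 := Cconj x0). set (y1 := Cconj x1). set (y2 := Cconj x2).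
  set (z := fun k => Cmult (RtoC r) (Cpow (omega m) k)).
  assert (Hz: forall k, Cmod (z k) = r).
  { intros k. unfold z. rewrite Cmod_mult, Cmod_omega_pow, Cmod_R, Rabs_pos_eq; lra. }
  set (Pi := fun k => Cmult (Pk m x0 x1 x2 k) (Qk m y0 y1 y2 k)).
  set (Tot := csum m (fun k => Cmult (G (z k)) (Pi k))).
  assert (HRe: 0 <= Re Tot).
  { apply Re_csum_nonneg. intros k hk. unfold Pi, y0, y1, y2. rewrite Qk_conj by auto.
    rewrite <- Cmod2_conj, re_scal_r.
    destruct (HG (z k)) as [_ Hpos]. rewrite Hz; lra.
    apply Rmult_le_pos. lra. apply pow_le, Cmod_ge_0. }
  assert (Hser1: CS (fun j => csum m (fun k => Cmult (Cmult (c j) (Cpow (z k) j)) (Pi k))) Tot).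
  { unfold Tot. apply CS_csum. intros k hk.
    destruct (HG (z k)) as [Hs _]. rewrite Hz; lra.
    pose proof (is_series_scal (K:=C_AbsRing) (V:=C_NormedModule) (Pi k) _ _ Hs) as H.
    replace (Cmult (G (z k)) (Pi k)) with (scal (Pi k) (G (z k))) by (Ceq; change (Cmult (Pi k) (G (z k)) = Cmult (G (z k)) (Pi k)); ring).
    revert H. apply is_series_ext. intros j. Ceq. change (Cmult (Pi k) (Cmult (c j) (Cpow (z k) j)) = Cmult (Cmult (c j) (Cpow (z k) j)) (Pi k)). ring. }
  set (uj := fun j => Cmult (Cmult (c j) (RtoC (r^j))) (Wj m x0 x1 x2 y0 y1 y2 j)).
  assert (Hser2: CS uj (Cmult Tot (RtoC (/ INR m)))).
  { assert (Hmpos: INR m <> 0) by (apply not_0_INR; lia).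
    pose proof (is_series_scal (K:=C_AbsRing) (V:=C_NormedModule) (RtoC (/ INR m)) _ _ Hser1) as H.
    replace (Cmult Tot (RtoC (/ INR m))) with (scal (RtoC (/ INR m)) Tot) by (Ceq; change (Cmult (RtoC (/ INR m)) Tot = Cmult Tot (RtoC (/ INR m))); ring).
    revert H. apply is_series_ext. intros j.
    change (Cmult (RtoC (/ INR m)) (csum m (fun k => Cmult (Cmult (c j) (Cpow (z k) j)) (Pi k))) = uj j).
    unfold z, Pi. rewrite expand by auto. unfold uj.
    rewrite RtoC_inv by auto. field. intro h. apply Hmpos. injection h. auto. }
  set (wj := fun j => if (j <=? 2)%nat then uj j else RtoC 0).
  assert (Hw: CS wj (mainQ c r x0 x1 x2)).
  { pose proof (CS_finite wj 2) as H.
    replace (mainQ c r x0 x1 x2) with (sum_n (G:=C_AbelianMonoid) wj 2). apply H.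
    intros n hn. unfold wj. destruct (Nat.leb_spec n 2). lia. reflexivity.
    rewrite !sumC_S, sumC_0. unfold wj, uj. simpl Nat.leb. cbv iota.
    rewrite Wj_0, Wj_1, Wj_2 by auto. unfold mainQ, y0, y1, y2. simpl pow. rewrite Rmult_1_r. Ceq.
    ring. }
  set (vj := fun j => if (j <=? 2)%nat then RtoC 0 else uj j).
  set (B := (Cmod x0 + Cmod x1 + Cmod x2) * (Cmod x0 + Cmod x1 + Cmod x2)).
  assert (HB: 0 <= B) by (unfold B; pose proof (Cmod_ge_0 x0); pose proof (Cmod_ge_0 x1); pose proof (Cmod_ge_0 x2); nra).
  assert (Hv: CS vj (Cminus (Cmult Tot (RtoC (/ INR m))) (mainQ c r x0 x1 x2))).
  { pose proof (is_series_minus _ _ _ _ Hser2 Hw) as H. revert H. apply is_series_ext.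
    intros j. unfold vj, wj. destruct (j <=? 2)%nat; Ceq; change (Cplus (uj j) (Copp (uj j)) = RtoC 0) || change (Cplus (uj j) (Copp (RtoC 0)) = uj j); ring. }
  assert (HM0: 0 <= M) by (pose proof (HcM 0%nat); pose proof (Cmod_ge_0 (c 0%nat)); simpl pow in *; lra).
  assert (Hvb: forall j, Cmod (vj j) <= B * M * sg^(m-2) * sg^j).
  { intros j. assert (0 <= sg^(m-2)) by (apply pow_le; lra). assert (0 <= sg^j) by (apply pow_le; lra).
    assert (0 <= B * M * sg^(m-2) * sg^j) by (apply Rmult_le_pos; [apply Rmult_le_pos; [apply Rmult_le_pos|]|]; lra).
    unfold vj. destruct (Nat.leb_spec j 2). rewrite Cmod_0; lra.
    destruct (le_lt_dec (m-2) j) as [h|h].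
    - unfold uj. rewrite !Cmod_mult, Cmod_R, Rabs_pos_eq by (apply pow_le; lra).
      assert (HW: Cmod (Wj m x0 x1 x2 y0 y1 y2 j) <= B).
      { eapply Rle_trans. apply Wj_bound. unfold y0, y1, y2. rewrite !Cmod_conj. unfold B. lra. }
      pose proof (HcM j). pose proof (pow_le_shift sg (m-2) j ltac:(lra) h).
      pose proof (Cmod_ge_0 (Wj m x0 x1 x2 y0 y1 y2 j)). pose proof (Cmod_ge_0 (c j)).
      assert (0 <= r^j) by (apply pow_le; lra).
      assert (Cmod (c j) * r ^ j <= M * sg^(m-2) * sg^j).
      { eapply Rle_trans. eauto. rewrite Rmult_assoc, (Rmult_assoc M). apply Rmult_le_compat_l. lra.
        apply Rmult_le_compat_r; lra. }
      replace (B * M * sg ^ (m - 2) * sg ^ j) with ((M * sg^(m-2) * sg^j) * B) by ring.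
      apply Rmult_le_compat; try lra. apply Rmult_le_pos; lra.
    - unfold uj. rewrite Wj_mid by lia. rewrite Cmult_0_r, Cmod_0. lra. }
  assert (Hgeo: is_series (fun j => B * M * sg^(m-2) * sg^j) (B * M * sg^(m-2) * / (1 - sg))).
  { apply (is_series_scal (K:=R_AbsRing) (V:=R_NormedModule) (B * M * sg^(m-2))).
    apply is_series_geom. rewrite Rabs_pos_eq; lra. }
  pose proof (CS_norm_le _ _ _ _ Hv Hvb Hgeo) as Hn.
  pose proof (re_le_Cmod (Cminus (Cmult Tot (RtoC (/ INR m))) (mainQ c r x0 x1 x2))) as Hre.
  apply Rabs_le_between in Hre.
  unfold Cminus in Hre. rewrite re_plus, re_opp, re_scal_r in Hre.
  assert (0 <= Re Tot * / INR m) by (apply Rmult_le_pos; [lra| apply Rlt_le, Rinv_0_lt_compat, lt_0_INR; lia]).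
  unfold Rdiv. fold B. unfold Cminus in Hn. clearbody B. lra.
Qed.

Lemma toeplitz (c : nat -> C) (G : C -> C) (Hc0: c 0%nat = RtoC 1)
  (HG: forall z, 0 < Cmod z < 1 -> CS (fun j => Cmult (c j) (Cpow z j)) (G z) /\ 0 < Re (G z))
  (r : R) (Hr: 0 < r < 1) (x0 x1 x2 : C) : 0 <= Re (mainQ c r x0 x1 x2).
Proof.
  remember ((1 + r)/2) as t eqn:Htd. assert (Ht: 0 < t < 1) by lra. assert (Hrt: r < t) by lra.
  destruct (HG (RtoC t)) as [Hs _]. rewrite Cmod_RtoC_pos; lra.
  destruct (CS_terms_bounded _ _ Hs) as [M HM].
  remember (r / t) as q eqn:Hqd.
  assert (Hq: 0 <= q < 1).
  { rewrite Hqd. split. apply Rlt_le, Rdiv_lt_0_compat; lra.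
    unfold Rdiv; apply (Rmult_lt_reg_r t); [lra|]; rewrite Rmult_assoc, Rinv_l by lra; lra. }
  remember (sqrt q) as sg eqn:Hsgd.
  assert (Hsg2: sg * sg = q) by (rewrite Hsgd; apply sqrt_sqrt; lra).
  assert (Hsg: 0 <= sg < 1).
  { split. rewrite Hsgd. apply sqrt_pos. destruct (Rlt_le_dec sg 1); auto.
    assert (1 <= sg * sg) by nra. lra. }
  assert (HcM: forall j, Cmod (c j) * r^j <= M * sg^j * sg^j).
  { intros j. specialize (HM j). rewrite Cmod_mult, Cmod_pow, Cmod_RtoC_pos in HM by lra.
    replace r with (q * t) by (rewrite Hqd; field; lra). rewrite Rpow_mult_distr.
    replace (M * sg^j * sg^j) with (M * q^j) by (rewrite <- Hsg2, Rpow_mult_distr; ring).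
    assert (0 <= q ^ j) by (apply pow_le; lra).
    replace (Cmod (c j) * (q ^ j * t ^ j)) with ((Cmod (c j) * t ^ j) * q ^ j) by ring.
    apply Rmult_le_compat_r; lra. }
  assert (HM0: 0 <= M) by (pose proof (HcM 0%nat); pose proof (Cmod_ge_0 (c 0%nat)); rewrite !pow_O in *; lra).
  set (B := (Cmod x0 + Cmod x1 + Cmod x2) * (Cmod x0 + Cmod x1 + Cmod x2)).
  assert (HB: 0 <= B) by (unfold B; pose proof (Cmod_ge_0 x0); pose proof (Cmod_ge_0 x1); pose proof (Cmod_ge_0 x2); nra).
  assert (Hall: forall m, (5 <= m)%nat -> - (B * M / (1 - sg) * sg ^ (m-2)) <= Re (mainQ c r x0 x1 x2)).
  { intros m Hm. pose proof (toep_m c G Hc0 HG r Hr x0 x1 x2 M sg Hsg HcM m Hm) as H.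
    fold B in H. replace (B * M / (1 - sg) * sg ^ (m-2)) with (B * M * sg ^ (m - 2) / (1 - sg)) by (field; lra).
    exact H. }
  clearbody B.
  set (E := B * M / (1 - sg)) in *. assert (HE: 0 <= E).
  { unfold E. apply Rmult_le_pos. apply Rmult_le_pos; lra. apply Rlt_le, Rinv_0_lt_compat; lra. }
  clearbody E.
  destruct (Rle_dec 0 (Re (mainQ c r x0 x1 x2))) as [h|h]; auto. exfalso.
  set (X := Re (mainQ c r x0 x1 x2)) in *. clearbody X.
  assert (Hy: 0 < - X / (E + 1)) by (apply Rdiv_lt_0_compat; lra).
  destruct (pow_lt_1_zero sg ltac:(rewrite Rabs_pos_eq; lra) _ Hy) as [N HN].
  specialize (HN N (le_n N)). specialize (Hall (N + 2 + 3)%nat ltac:(lia)).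
  replace (N + 2 + 3 - 2)%nat with (N + 3)%nat in Hall by lia.
  rewrite Rabs_pos_eq in HN by (apply pow_le; lra).
  assert (sg ^ (N + 3) <= sg ^ N) by (apply pow_le_shift; lra || lia).
  assert (E * sg ^ (N+3) <= E * (- X / (E + 1))) by (apply Rmult_le_compat_l; lra).
  assert (E * (- X / (E + 1)) < - X).
  { apply (Rmult_lt_reg_r (E+1)). lra. replace (E * (- X / (E + 1)) * (E + 1)) with (E * (-X)) by (field; lra). nra. }
  lra.
Qed.


Definition Qf (A B x0 x1 x2 : C) : C :=
  Cplus (Cplus (Cplus (Cplus (Cmult x0 (Cconj x0)) (Cmult x1 (Cconj x1))) (Cmult x2 (Cconj x2)))
               (Cmult A (Cplus (Cmult x0 (Cconj x1)) (Cmult x1 (Cconj x2)))))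
        (Cmult B (Cmult x0 (Cconj x2))).

Lemma Qf_id a1 a2 b1 b2 e1 e2 :
  let A := (a1, a2) : C in let B := (b1, b2) : C in let e := (e1, e2) : C in
  let w := Cplus A (Cmult (Cconj A) (Cconj e)) in
  let t := Cmult (RtoC (-/2)) (Cconj w) in
  Re (Qf A B e t (RtoC 1)) =
  (e1*e1 + e2*e2) + 1 - (a1*a1 + a2*a2) * (1 + e1*e1 + e2*e2) / 4
   + Re (Cmult (Cminus B (Cmult (RtoC (/2)) (Cmult A A))) e).
Proof. intros. unfold Qf, A, B, e, w, t. simpl. field. Qed.

Lemma alg_D (A B : C) : (forall x0 x1 x2, 0 <= Re (Qf A B x0 x1 x2)) ->
  Cmod (Cminus B (Cmult (RtoC (/2)) (Cmult A A))) <= 2 - (Cmod A * Cmod A) / 2.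
Proof.
  intros HQ. destruct A as [a1 a2]. destruct B as [b1 b2].
  assert (HA: Cmod (a1, a2) * Cmod (a1,a2) = a1*a1 + a2*a2).
  { pose proof (Cmod2_alt (a1,a2)) as H. simpl in H. simpl. lra. }
  rewrite HA.
  remember (Cminus (b1, b2) (Cmult (RtoC (/ 2)) (Cmult (a1, a2) (a1, a2)))) as D eqn:HD.
  destruct D as [d1 d2].
  destruct (Req_dec (d1*d1 + d2*d2) 0) as [h|h].
  - assert (d1 = 0 /\ d2 = 0) as [-> ->] by nra.
    specialize (HQ (1,0) (Cmult (RtoC (-/2)) (Cconj (Cplus (a1,a2) (Cmult (Cconj (a1,a2)) (Cconj (1,0)))))) (RtoC 1)).
    rewrite (Qf_id a1 a2 b1 b2 1 0) in HQ. rewrite <- HD in HQ. simpl in HQ.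
    replace (Cmod (0,0)) with 0. lra. symmetry. apply Cmod_0.
  - set (n := Cmod (d1, d2)).
    assert (Hn2: n * n = d1*d1 + d2*d2) by (unfold n; pose proof (Cmod2_alt (d1,d2)) as H; simpl in H; simpl; lra).
    assert (Hn: 0 < n) by (unfold n; apply Cmod_gt_0; intro H0; injection H0; intros; subst; lra).
    clearbody n.
    specialize (HQ (-d1/n, d2/n) (Cmult (RtoC (-/2)) (Cconj (Cplus (a1,a2) (Cmult (Cconj (a1,a2)) (Cconj (-d1/n,d2/n)))))) (RtoC 1)).
    rewrite (Qf_id a1 a2 b1 b2 (-d1/n) (d2/n)) in HQ. rewrite <- HD in HQ.
    assert (He: -d1/n * (-d1/n) + d2/n * (d2/n) = 1).
    { replace (-d1/n * (-d1/n) + d2/n * (d2/n)) with ((d1*d1+d2*d2)/(n*n)) by (field; lra).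
      rewrite <- Hn2. field. lra. }
    rewrite He in HQ. simpl in HQ.
    assert (Hre: d1 * (- d1 / n) - d2 * (d2 / n) = - n).
    { replace (d1 * (- d1 / n) - d2 * (d2 / n)) with (-(d1*d1+d2*d2)/n) by (field; lra).
      rewrite <- Hn2. field. lra. }
    replace (1 + - d1 / n * (- d1 / n) + d2 / n * (d2 / n)) with 2 in HQ by lra. rewrite Hre in HQ. lra.
Qed.

Lemma fs_real (X Z nu : R) : 0 <= X -> X <= 4 ->
  Z <= 2 - X/2 + Rabs (nu - /2) * X -> Z <= 2 * Rmax 1 (Rabs (2*nu - 1)).
Proof.
  intros H0 H4 HZ. unfold Rmax. destruct (Rle_dec 1 (Rabs (2 * nu - 1))) as [h|h].
  - assert (Rabs (nu - /2) = Rabs (2*nu-1) / 2).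
    { replace (2*nu - 1) with (2 * (nu - /2)) by field. rewrite Rabs_mult, (Rabs_pos_eq 2) by lra. field. }
    rewrite H in HZ. set (u := Rabs (2*nu-1)) in *. clearbody u.
    assert ((u/2 - /2) * X <= (u/2 - /2) * 4) by (apply Rmult_le_compat_l; lra). lra.
  - assert (Rabs (nu - /2) = Rabs (2*nu-1) / 2).
    { replace (2*nu - 1) with (2 * (nu - /2)) by field. rewrite Rabs_mult, (Rabs_pos_eq 2) by lra. field. }
    rewrite H in HZ. set (u := Rabs (2*nu-1)) in *. clearbody u.
    assert ((u/2 - /2) * X <= 0) by (apply Rmult_le_0_r; lra). lra.
Qed.

Lemma carath_FS (c : nat -> C) (G : C -> C) (Hc0: c 0%nat = RtoC 1)
  (HG: forall z, 0 < Cmod z < 1 -> CS (fun j => Cmult (c j) (Cpow z j)) (G z) /\ 0 < Re (G z))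
  (nu : R) :
  Cmod (Cminus (c 2%nat) (Cmult (RtoC nu) (Cmult (c 1%nat) (c 1%nat)))) <= 2 * Rmax 1 (Rabs (2*nu - 1)).
Proof.
  set (Y := Cmod (Cminus (c 2%nat) (Cmult (RtoC nu) (Cmult (c 1%nat) (c 1%nat))))).
  set (K := 2 * Rmax 1 (Rabs (2*nu - 1))).
  assert (HK: 2 <= K) by (unfold K; pose proof (Rmax_l 1 (Rabs (2*nu-1))); lra).
  assert (Hr: forall r, 0 < r < 1 -> r * r * Y <= K).
  { intros r Hr.
    set (A := Cmult (c 1%nat) (RtoC r)). set (B := Cmult (c 2%nat) (RtoC (r^2))).
    assert (HQ: forall x0 x1 x2, 0 <= Re (Qf A B x0 x1 x2)).
    { intros. pose proof (toeplitz c G Hc0 HG r Hr x0 x1 x2) as H.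
      replace (Qf A B x0 x1 x2) with (mainQ c r x0 x1 x2). exact H.
      unfold mainQ, Qf, A, B. rewrite Hc0. ring. }
    pose proof (alg_D A B HQ) as HD.
    set (X := Cmod A * Cmod A) in *.
    assert (HX0: 0 <= X) by (unfold X; pose proof (Cmod_ge_0 A); nra).
    assert (HX4: X <= 4) by (pose proof (Cmod_ge_0 (Cminus B (Cmult (RtoC (/ 2)) (Cmult A A)))); lra).
    assert (HZ: Cmod (Cminus B (Cmult (RtoC nu) (Cmult A A))) <= 2 - X/2 + Rabs (nu - /2) * X).
    { replace (Cminus B (Cmult (RtoC nu) (Cmult A A))) with
        (Cplus (Cminus B (Cmult (RtoC (/ 2)) (Cmult A A))) (Cmult (RtoC (/2 - nu)) (Cmult A A))).
      2: { rewrite RtoC_minus. ring. }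
      eapply Rle_trans. apply Cmod_triangle. rewrite Cmod_mult, Cmod_mult, Cmod_R.
      replace (Rabs (/2 - nu)) with (Rabs (nu - /2)) by (rewrite <- Rabs_Ropp; f_equal; ring).
      fold X. lra. }
    pose proof (fs_real _ _ nu HX0 HX4 HZ) as H.
    replace (Cminus B (Cmult (RtoC nu) (Cmult A A))) with
      (Cmult (RtoC (r*r)) (Cminus (c 2%nat) (Cmult (RtoC nu) (Cmult (c 1%nat) (c 1%nat))))) in H.
    2: { unfold A, B. rewrite RtoC_mult. simpl pow. rewrite Rmult_1_r, RtoC_mult. ring. }
    rewrite Cmod_mult, Cmod_R, Rabs_pos_eq in H by nra. exact H. }
  clearbody Y K.
  destruct (Rle_dec Y K) as [h|h]; auto. exfalso.
  assert (HY: 0 < Y) by lra.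
  set (r := sqrt ((1 + K/Y)/2)).
  assert (Hk: 0 < K / Y < 1).
  { split. apply Rdiv_lt_0_compat; lra. unfold Rdiv. apply (Rmult_lt_reg_r Y). lra.
    rewrite Rmult_assoc, Rinv_l; lra. }
  assert (Hrr: r * r = (1 + K/Y)/2) by (unfold r; apply sqrt_sqrt; lra).
  assert (Hr0: 0 < r) by (unfold r; apply sqrt_lt_R0; lra).
  assert (Hr1: r < 1).
  { destruct (Rlt_le_dec r 1); auto. assert (1 <= r * r) by nra. lra. }
  specialize (Hr r (conj Hr0 Hr1)). rewrite Hrr in Hr.
  assert (K / Y * Y = K) by (field; lra).
  assert ((1 + K / Y) / 2 * Y > K / Y * Y) by (apply Rmult_gt_compat_r; lra).
  lra.
Qed.


Lemma bound_eq beta mu : 0 <= beta <= 1 ->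
  2 * Rmax 1 (Rabs (2 * (mu * (3 - 2*beta) / (2-beta)^2) - 1)) / (3 - 2*beta) = fekete_szego_bound beta mu.
Proof.
  intros Hb. set (nu := mu * (3 - 2*beta) / (2-beta)^2).
  assert (H2: 0 < (2-beta)^2) by (simpl; nra). assert (H3: 0 < 3 - 2*beta) by lra.
  unfold fekete_szego_bound, phi.
  destruct (Rlt_dec mu 0) as [h|h].
  - assert (nu < 0). { unfold nu. unfold Rdiv. assert (0 < /(2-beta)^2) by (apply Rinv_0_lt_compat; lra).
      assert (mu * (3 - 2*beta) < 0) by nra. nra. }
    rewrite Rabs_left by lra. rewrite Rmax_right by lra. unfold nu. field. lra.
  - destruct (Rle_dec mu ((2 - beta) ^ 2 / (3 - 2 * beta))) as [h2|h2].
    + assert (0 <= nu <= 1).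
      { unfold nu. split. apply Rmult_le_pos. nra. apply Rlt_le, Rinv_0_lt_compat; lra.
        apply (Rmult_le_reg_r ((2-beta)^2)). lra. unfold Rdiv. rewrite Rmult_assoc, Rinv_l by lra.
        apply (Rmult_le_compat_r (3-2*beta)) in h2; [|lra]. unfold Rdiv in h2.
        rewrite Rmult_assoc, Rinv_l in h2 by lra. lra. }
      rewrite Rmax_left. field. lra. apply Rabs_le. lra.
    + assert (1 < nu).
      { unfold nu. apply (Rmult_lt_reg_r ((2-beta)^2)). lra. unfold Rdiv. rewrite Rmult_assoc, Rinv_l by lra.
        apply Rnot_le_lt in h2. apply (Rmult_lt_compat_r (3-2*beta)) in h2; [|lra]. unfold Rdiv in h2.
        rewrite Rmult_assoc, Rinv_l in h2 by lra. lra. }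
      rewrite Rabs_right by lra. rewrite Rmax_right by lra. unfold nu. field. lra.
Qed.

Lemma analytic_CS (f : C -> C) (a : nat -> C) : analytic_on_disk_with_coeffs f a ->
  forall w, Cmod w < 1 -> CS (fun n => Cmult (a n) (Cpow w n)) (f w).
Proof.
  intros H w Hw. specialize (H w Hw). unfold is_pseries in H. revert H. apply is_series_ext.
  intros n. rewrite powC. Ceq. change (Cmult (Cpow w n) (a n) = Cmult (a n) (Cpow w n)). ring.
Qed.

Lemma upper_bound beta mu f a : 0 <= beta <= 1 -> in_A beta f a ->
  Cmod (fs_functional a mu) <= fekete_szego_bound beta mu.
Proof.
  intros Hb [Han [Ha0 [Ha1 Hder]]].
  pose proof (analytic_CS f a Han) as Hf.
  set (G := fun z => Cplus (Cmult (RtoC beta) (Cdiv (f z) z)) (Cmult (RtoC (1 - beta)) (C_derive f z))).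
  assert (Hc0: cc a beta 0 = RtoC 1).
  { unfold cc. rewrite Ha1. simpl INR. rewrite RtoC_minus, RtoC_mult. ring. }
  assert (HG: forall z, 0 < Cmod z < 1 -> CS (fun j => Cmult (cc a beta j) (Cpow z j)) (G z) /\ 0 < Re (G z)).
  { intros z Hz. assert (Hz0: z <> RtoC 0) by (intro h; rewrite h, Cmod_0 in Hz; lra).
    destruct (Hder z (proj2 Hz)) as [l [Hl Hpos]].
    pose proof (is_C_derive_unique f z l Hl) as Hl'.
    destruct (ps_derive a f Hf z (proj2 Hz)) as [l2 [Hs2 Hd2]].
    pose proof (is_C_derive_unique f z l2 Hd2) as Hl2'.
    assert (E: l2 = l) by congruence. rewrite E in Hs2.
    unfold G. rewrite Hl'. split.
    - apply combine. apply Hf; lra. exact Ha0. exact Hs2. exact Hz0.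
    - apply Hpos; auto. }
  pose proof (carath_FS (cc a beta) G Hc0 HG (mu * (3 - 2*beta) / (2-beta)^2)) as H.
  rewrite <- bound_eq by auto.
  assert (H3: 0 < 3 - 2*beta) by lra. assert (H2: 0 < 2 - beta) by lra.
  replace (fs_functional a mu) with
   (Cmult (Cminus (cc a beta 2) (Cmult (RtoC (mu * (3 - 2 * beta) / (2 - beta) ^ 2)) (Cmult (cc a beta 1) (cc a beta 1))))
          (RtoC (/ (3 - 2*beta)))).
  2: { unfold fs_functional, cc.
       replace (INR 3 - INR 2 * beta) with (3 - 2*beta) by (simpl; ring).
       replace (INR 2 - INR 1 * beta) with (2 - beta) by (simpl; ring).
       set (p := 3 - 2*beta) in *. set (q := 2 - beta) in *. clearbody p q.
       assert (Hp: RtoC p <> RtoC 0) by (intro h; injection h; lra).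
       assert (Hq: RtoC q <> RtoC 0) by (intro h; injection h; lra).
       rewrite RtoC_inv by lra. rewrite RtoC_div by (apply pow_nonzero; lra).
       rewrite RtoC_mult, RtoC_pow. Ceq. field. auto. }
  rewrite Cmod_mult, Cmod_R, Rabs_pos_eq by (apply Rlt_le, Rinv_0_lt_compat; lra).
  unfold Rdiv at 2. apply Rmult_le_compat_r. apply Rlt_le, Rinv_0_lt_compat; lra. exact H.
Qed.


Definition fsum (a : nat -> C) (z : C) : C :=
  @iota C_CompleteNormedModule (fun l => CS (fun n => Cmult (a n) (Cpow z n)) l).

Lemma fsum_correct a z l : CS (fun n => Cmult (a n) (Cpow z n)) l -> fsum a z = l.
Proof.
  intros H. unfold fsum. apply (iota_unique (K:=C_AbsRing) (V:=C_CompleteNormedModule)).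
  intros y Hy. eapply CS_unique; eauto. exact H.
Qed.

Definition aR (c : nat -> R) (beta : R) (n : nat) : R :=
  match n with O => 0 | S j => c j / (INR (S j) - INR j * beta) end.

Definition aC c beta n : C := RtoC (aR c beta n).

Lemma den_pos beta j : 0 <= beta <= 1 -> 1 <= INR (S j) - INR j * beta.
Proof. intros Hb. rewrite S_INR. pose proof (pos_INR j). nra. Qed.

Lemma aR_bound c beta n : 0 <= beta <= 1 -> (forall j, 0 <= c j <= 2) -> Rabs (aR c beta n) <= 2.
Proof.
  intros Hb Hc. destruct n as [|j]; unfold aR. rewrite Rabs_R0; lra.
  pose proof (den_pos beta j Hb). specialize (Hc j).
  revert H. generalize (INR (S j) - INR j * beta). intros d Hd.
  rewrite Rabs_pos_eq by (apply Rdiv_le_0_compat; lra).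
  apply (Rmult_le_reg_r d). lra.
  unfold Rdiv. rewrite Rmult_assoc, Rinv_l by lra. nra.
Qed.

Lemma geomC z : Cmod z < 1 -> CS (fun j => Cpow z j) (Cinv (Cminus 1 z)).
Proof.
  intros Hz. assert (Hz1: Cminus 1 z <> RtoC 0).
  { intro h. assert (z = RtoC 1) by (apply Ceq_minus in h; auto). subst. rewrite Cmod_1 in Hz. lra. }
  assert (Hsum: forall n, sum_n (G:=C_AbelianMonoid) (fun j => Cpow z j) n = Cmult (Cminus 1 (Cpow z (S n))) (Cinv (Cminus 1 z))).
  { induction n. rewrite sumC_0. simpl. field. auto.
    rewrite sumC_S, IHn. simpl. field. auto. }
  apply (CS_bound _ _ (fun n => Cmod z ^ (S n) / Cmod (Cminus 1 z))).
  - intros n. rewrite Hsum. right.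
    replace (Cminus (Cmult (Cminus 1 (Cpow z (S n))) (Cinv (Cminus 1 z))) (Cinv (Cminus 1 z))) with
      (Copp (Cdiv (Cpow z (S n)) (Cminus 1 z))) by (field; auto).
    rewrite Cmod_opp, Cmod_div, Cmod_pow by auto. reflexivity.
  - intros eps Heps. assert (Hd: 0 < Cmod (Cminus 1 z)) by (apply Cmod_gt_0; auto).
    destruct (pow_lt_1_zero (Cmod z) ltac:(rewrite Rabs_pos_eq; [lra|apply Cmod_ge_0]) (eps * Cmod (Cminus 1 z))) as [N HN].
    nra. exists N. intros n hn. specialize (HN (S n) ltac:(lia)). rewrite Rabs_pos_eq in HN by (apply pow_le, Cmod_ge_0).
    apply (Rmult_lt_reg_r (Cmod (Cminus 1 z))). lra. unfold Rdiv. rewrite Rmult_assoc, Rinv_l; lra.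
Qed.

Lemma re_pos w : Cmod w < 1 -> 0 < Re (Cminus (Cmult (RtoC 2) (Cinv (Cminus 1 w))) 1).
Proof.
  intros Hw. destruct w as [x y].
  assert (Hm: x*x + y*y < 1).
  { pose proof (Cmod2_alt (x,y)) as H. simpl in H. pose proof (Cmod_ge_0 (x,y)).
    assert (Cmod (x,y) * Cmod (x,y) < 1) by nra. simpl. lra. }
  assert (Hd: 0 < (1-x)*(1-x) + y*y) by nra.
  assert (E: Re (Cminus (Cmult (RtoC 2) (Cinv (Cminus 1 (x,y)))) 1) =
     (2*(1-x) - ((1-x)*(1-x) + y*y)) / ((1-x)*(1-x) + y*y)).
  { unfold Cminus, Cinv, Cmult, Cplus, Copp, Re. simpl. field. nra. }
  rewrite E. apply Rdiv_lt_0_compat; nra.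
Qed.

Lemma construct c beta (Hb : 0 <= beta <= 1) (Hc0 : c 0%nat = 1) (Hcb : forall j, 0 <= c j <= 2)
  (Hpos : forall z, 0 < Cmod z < 1 -> forall V, CS (fun j => Cmult (RtoC (c j)) (Cpow z j)) V -> 0 < Re V) :
  in_A beta (fsum (aC c beta)) (aC c beta).
Proof.
  set (a := aC c beta).
  assert (Hex: forall z, Cmod z < 1 -> CS (fun n => Cmult (a n) (Cpow z n)) (fsum a z)).
  { intros z Hz.
    assert (H: ex_series (K:=C_AbsRing) (V:=C_CompleteNormedModule) (fun n => Cmult (a n) (Cpow z n))).
    { apply (ex_series_le (K:=C_AbsRing) (V:=C_CompleteNormedModule) _ (fun n => 2 * Cmod z ^ n)).
      - intros n. change (norm (Cmult (a n) (Cpow z n))) with (Cmod (Cmult (a n) (Cpow z n))).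
        rewrite Cmod_mult, Cmod_pow. unfold a, aC. rewrite Cmod_R.
        apply Rmult_le_compat_r. apply pow_le, Cmod_ge_0. apply aR_bound; auto.
      - apply (ex_series_scal (K:=R_AbsRing) (V:=R_NormedModule) 2). apply ex_series_geom.
        rewrite Rabs_pos_eq; [lra|apply Cmod_ge_0]. }
    destruct H as [l Hl]. rewrite (fsum_correct a z l Hl). exact Hl. }
  split; [|split; [|split]].
  - intros z Hz. unfold is_pseries. pose proof (Hex z Hz) as H. revert H. apply is_series_ext.
    intros n. pose proof (powC z n) as E. transitivity (Cmult (Cpow z n) (a n)). Ceq. ring. rewrite <- E. reflexivity.
  - reflexivity.
  - unfold a, aC, aR. f_equal. simpl. rewrite Hc0. field.
  - intros z Hz. destruct (ps_derive a (fsum a) Hex z Hz) as [l [Hs Hd]].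
    exists l. split; auto. intros Hz0.
    pose proof (combine a (fsum a z) l z beta (Hex z Hz) eq_refl Hs Hz0) as H.
    apply (Hpos z). split; auto. apply Cmod_gt_0; auto.
    revert H. apply is_series_ext. intros j. unfold cc, a, aC, aR.
    pose proof (den_pos beta j Hb). rewrite <- RtoC_mult. Ceq. f_equal. f_equal. field. lra.
Qed.

Definition cO (j : nat) : R := if (j =? 0)%nat then 1 else 2.
Definition cM (j : nat) : R := if (j =? 0)%nat then 1 else if Nat.even j then 2 else 0.

Lemma delta_CS : CS (fun j => if (j =? 0)%nat then RtoC 1 else RtoC 0) (RtoC 1).
Proof.
  pose proof (CS_finite (fun j => if (j =? 0)%nat then RtoC 1 else RtoC 0) 0) as H.
  rewrite sumC_0 in H. simpl in H. apply H. intros n hn. destruct n. lia. reflexivity.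
Qed.

Lemma Cmod_pos_neq z : 0 < Cmod z -> z <> RtoC 0.
Proof. intros H h. rewrite h, Cmod_0 in H. lra. Qed.

Lemma one_minus_neq z : Cmod z < 1 -> Cminus 1 z <> RtoC 0.
Proof. intros Hz h. assert (z = RtoC 1) by (apply Ceq_minus in h; auto). subst. rewrite Cmod_1 in Hz. lra. Qed.

Lemma posO z : 0 < Cmod z < 1 -> forall V, CS (fun j => Cmult (RtoC (cO j)) (Cpow z j)) V -> 0 < Re V.
Proof.
  intros Hz V HV.
  pose proof (is_series_scal (K:=C_AbsRing) (V:=C_NormedModule) (RtoC 2) _ _ (geomC z (proj2 Hz))) as H1.
  pose proof (is_series_minus _ _ _ _ H1 delta_CS) as H2.
  assert (E: CS (fun j => Cmult (RtoC (cO j)) (Cpow z j)) (Cminus (Cmult (RtoC 2) (Cinv (Cminus 1 z))) 1)).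
  { revert H2. apply is_series_ext. intros j. unfold cO. destruct (j =? 0)%nat eqn:Ej.
    - apply Nat.eqb_eq in Ej. subst. Ceq. simpl. change (Cplus (Cmult 2 1) (Copp 1) = Cmult 1 1). ring.
    - Ceq. change (Cplus (Cmult 2 (Cpow z j)) (Copp 0) = Cmult 2 (Cpow z j)). ring. }
  rewrite (CS_unique _ _ _ HV E). apply re_pos. lra.
Qed.

Lemma pow_opp z j : Cpow (Copp z) j = if Nat.even j then Cpow z j else Copp (Cpow z j).
Proof.
  induction j. reflexivity.
  rewrite Cpow_S, IHj, Nat.even_succ, <- Nat.negb_even. destruct (Nat.even j); simpl; ring.
Qed.

Lemma posM z : 0 < Cmod z < 1 -> forall V, CS (fun j => Cmult (RtoC (cM j)) (Cpow z j)) V -> 0 < Re V.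
Proof.
  intros Hz V HV.
  assert (Hz': Cmod (Copp z) < 1) by (rewrite Cmod_opp; lra).
  pose proof (is_series_plus _ _ _ _ (geomC z (proj2 Hz)) (geomC (Copp z) Hz')) as H1.
  pose proof (is_series_minus _ _ _ _ H1 delta_CS) as H2.
  assert (Hw: Cmod (Cmult z z) < 1) by (rewrite Cmod_mult; pose proof (Cmod_ge_0 z); nra).
  assert (E: CS (fun j => Cmult (RtoC (cM j)) (Cpow z j)) (Cminus (Cmult (RtoC 2) (Cinv (Cminus 1 (Cmult z z)))) 1)).
  { replace (Cminus (Cmult (RtoC 2) (Cinv (Cminus 1 (Cmult z z)))) 1) with
      (plus (plus (Cinv (Cminus 1 z)) (Cinv (Cminus 1 (Copp z)))) (opp (RtoC 1))).
    2: { pose proof (one_minus_neq z (proj2 Hz)). pose proof (one_minus_neq _ Hz').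
         pose proof (one_minus_neq _ Hw).
         change (Cplus (Cplus (Cinv (Cminus 1 z)) (Cinv (Cminus 1 (Copp z)))) (Copp 1) =
                 Cminus (Cmult (RtoC 2) (Cinv (Cminus 1 (Cmult z z)))) 1).
         field. split; [|split]; auto. }
    revert H2. apply is_series_ext. intros j. rewrite pow_opp. unfold cM.
    destruct (j =? 0)%nat eqn:Ej.
    - apply Nat.eqb_eq in Ej. subst. simpl Nat.even. cbv iota. Ceq. change (Cplus (Cplus (Cpow z 0) (Cpow z 0)) (Copp 1) = Cmult 1 (Cpow z 0)). simpl. ring.
    - destruct (Nat.even j); Ceq.
      + change (Cplus (Cplus (Cpow z j) (Cpow z j)) (Copp 0) = Cmult 2 (Cpow z j)). ring.
      + change (Cplus (Cplus (Cpow z j) (Copp (Cpow z j))) (Copp 0) = Cmult 0 (Cpow z j)). ring. }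
  rewrite (CS_unique _ _ _ HV E). apply re_pos. exact Hw.
Qed.

Lemma fs_real_C (a2 a3 mu : R) :
  Cminus (RtoC a3) (Cmult (RtoC mu) (Cmult (RtoC a2) (RtoC a2))) = RtoC (a3 - mu * (a2 * a2)).
Proof. rewrite RtoC_minus, !RtoC_mult. reflexivity. Qed.

Lemma fsO beta mu : 0 <= beta <= 1 -> fs_functional (aC cO beta) mu = RtoC (phi beta mu).
Proof.
  intros Hb. unfold fs_functional, aC. rewrite fs_real_C. f_equal.
  unfold aR, cO, phi. simpl Nat.eqb. cbv iota.
  replace (INR 3 - INR 2 * beta) with (3 - 2*beta) by (simpl; ring).
  replace (INR 2 - INR 1 * beta) with (2 - beta) by (simpl; ring).
  field. lra.
Qed.

Lemma fsM beta mu : 0 <= beta <= 1 -> fs_functional (aC cM beta) mu = RtoC (2 / (3 - 2*beta)).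
Proof.
  intros Hb. unfold fs_functional, aC. rewrite fs_real_C. f_equal.
  unfold aR, cM. simpl Nat.eqb. simpl Nat.even. cbv iota.
  replace (INR 3 - INR 2 * beta) with (3 - 2*beta) by (simpl; ring).
  replace (INR 2 - INR 1 * beta) with (2 - beta) by (simpl; ring).
  field. lra.
Qed.

Lemma cO_ok : cO 0 = 1 /\ forall j, 0 <= cO j <= 2.
Proof. split. reflexivity. intros j. unfold cO. destruct (j =? 0)%nat; lra. Qed.

Lemma cM_ok : cM 0 = 1 /\ forall j, 0 <= cM j <= 2.
Proof. split. reflexivity. intros j. unfold cM. destruct (j =? 0)%nat. lra. destruct (Nat.even j); lra. Qed.

Theorem theorem3p1 (beta mu : R) (hbeta : 0 <= beta <= 1) :
  (forall (f : C -> C) (a : nat -> C), in_A beta f a ->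
     Cmod (fs_functional a mu) <= fekete_szego_bound beta mu) /\
  (exists (f : C -> C) (a : nat -> C), in_A beta f a /\
     Cmod (fs_functional a mu) = fekete_szego_bound beta mu).
Proof.
  split.
  - intros f a H. apply (upper_bound beta mu f a); auto.
  - assert (H2: 0 < (2-beta)^2) by (simpl; nra). assert (H3: 0 < 3 - 2*beta) by lra.
    assert (HO: in_A beta (fsum (aC cO beta)) (aC cO beta)).
    { apply construct; try apply cO_ok; auto. apply posO. }
    assert (HM: in_A beta (fsum (aC cM beta)) (aC cM beta)).
    { apply construct; try apply cM_ok; auto. apply posM. }
    assert (Hphi: phi beta mu = 2 / (3 - 2*beta) - 4 * mu / (2-beta)^2) by (unfold phi; field; lra).
    unfold fekete_szego_bound. destruct (Rlt_dec mu 0) as [h|h].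
    + exists (fsum (aC cO beta)), (aC cO beta). split; auto.
      rewrite (fsO beta mu hbeta), Cmod_R. apply Rabs_pos_eq. rewrite Hphi.
      assert (0 < 2 / (3 - 2*beta)) by (apply Rdiv_lt_0_compat; lra).
      assert (0 <= - 4 * mu / (2-beta)^2) by (apply Rdiv_le_0_compat; lra).
      unfold Rdiv in *. lra.
    + destruct (Rle_dec mu ((2 - beta) ^ 2 / (3 - 2 * beta))) as [h2|h2].
      * exists (fsum (aC cM beta)), (aC cM beta). split; auto.
        rewrite (fsM beta mu hbeta), Cmod_R. apply Rabs_pos_eq. apply Rlt_le, Rdiv_lt_0_compat; lra.
      * exists (fsum (aC cO beta)), (aC cO beta). split; auto.
        rewrite (fsO beta mu hbeta), Cmod_R. apply Rabs_left.
        apply Rnot_le_lt in h2.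
        assert (mu * (3 - 2*beta) > (2-beta)^2).
        { apply (Rmult_lt_compat_r (3-2*beta)) in h2; [|lra]. unfold Rdiv in h2.
          rewrite Rmult_assoc, Rinv_l in h2 by lra. lra. }
        unfold phi. apply Rdiv_neg_pos. 2: (apply Rmult_gt_0_compat; lra).
        simpl pow in *. nra.
Qed.
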